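(* For every $d\geq 2$, $m(\ell_\infty^d)=2d-1$, where $\ell_\infty^d$ is $\mathbb{R}^d$ with the norm $\|x\|_\infty=\max_i |x^{(i)}|$.
   Context: For a set $S$ in a normed space, its midpoint set is $M(S)=\{\tfrac12(x+y): x,y\in S,\ x\neq y\}$. A set $S$ is an M-set if every vector in $M(S)$ has norm exactly $1$ and every vector in $S$ has norm strictly greater than $1$. $m(X)$ denotes the largest cardinality of an M-set in the normed space $X$ if such a largest finite cardinality exists, and $m(X)=\infty$ otherwise. *)

(* Defs.v *)
From mathcomp Require Import ssreflect ssrbool eqtype ssrnat seq fintype.
From Stdlib Require Import Reals List.
Open Scope R_scope.

Definition vec (d : nat) := 'I_d -> R.

Definition norm_inf {d : nat} (x : vec d) : R :=
  List.fold_right Rmax 0 (List.map (fun i => Rabs (x i)) (enum 'I_d)).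

Definition midpoint {d : nat} (x y : vec d) : vec d :=
  fun i => (x i + y i) / 2.

Definition is_Mset {d : nat} (S : vec d -> Prop) : Prop :=
  (forall x y, S x -> S y -> x <> y -> norm_inf (midpoint x y) = 1) /\
  (forall x, S x -> norm_inf x > 1).

(* m(l_inf^d) = n : there is an M-set with exactly n elements, and every
   finite subset of any M-set has at most n elements (hence every M-set is
   finite with at most n elements). *)
Definition m_equals (d n : nat) : Prop :=
  (exists l : list (vec d),
      List.NoDup l /\ List.length l = n /\ is_Mset (fun x => List.In x l)) /\
  (forall S : vec d -> Prop, is_Mset S ->
     forall l : list (vec d), List.NoDup l -> (forall x, List.In x l -> S x) ->
       (List.length l <= n)%nat).

(* Main.v *)
Require Import Defs.
From mathcomp Require Import ssreflect ssrbool eqtype ssrnat seq fintype.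
From Stdlib Require Import Reals List Lra Lia ClassicalEpsilon Classical FinFun Arith.
Open Scope R_scope.

Lemma In_mem (T : eqType) (x : T) (s : list T) : List.In x s <-> x \in s.
Proof.
elim: s => [|y s IH] /=; first by split.
rewrite seq.in_cons; split.
- case=> [->|H]; first by rewrite eqxx.
  by apply/orP; right; apply/IH.
- case/orP=> [/eqP->|H]; [by left| by right; apply/IH].
Qed.

Section Fold.
Variable A : Type.
Variable f : A -> R.
Lemma fold_ge0 l : 0 <= fold_right Rmax 0 (List.map f l).
Proof. elim: l => [|y l IH] /=; [lra| apply: Rle_trans IH _; apply Rmax_r]. Qed.
Lemma fold_ge l y : List.In y l -> f y <= fold_right Rmax 0 (List.map f l).
Proof.
elim: l => [|z l IH] //= [->|H]; first by apply Rmax_l.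
apply: Rle_trans (IH H) _; apply Rmax_r.
Qed.
Lemma fold_le l c : 0 <= c -> (forall y, List.In y l -> f y <= c) ->
  fold_right Rmax 0 (List.map f l) <= c.
Proof.
move=> Hc; elim: l => [|z l IH] H /=; first by [].
apply Rmax_lub; [apply H; left| apply IH => y Hy; apply H; right]; done.
Qed.
Lemma fold_att l : fold_right Rmax 0 (List.map f l) = 0 \/
  exists y, List.In y l /\ fold_right Rmax 0 (List.map f l) = f y.
Proof.
elim: l => [|z l IH] /=; first by left.
rewrite /Rmax; case: Rle_dec => _.
- case: IH => [->|[y [H1 H2]]]; [by left|right; exists y; split; [right|]; done].
- right; exists z; split; [left|]; done.
Qed.
End Fold.

Lemma In_enum d (i : 'I_d) : List.In i (enum 'I_d).
Proof. by apply/In_mem; rewrite mem_enum. Qed.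

Lemma norm_ge d (x : vec d) i : Rabs (x i) <= norm_inf x.
Proof. unfold norm_inf; apply (@fold_ge _ (fun i0 => Rabs (x i0))); apply In_enum. Qed.

Lemma norm_le d (x : vec d) c : 0 <= c -> (forall i, Rabs (x i) <= c) -> norm_inf x <= c.
Proof. move=> Hc H; apply: (@fold_le _ (fun i0 => Rabs (x i0))) => // y _; apply H. Qed.

Lemma norm_gt1 d (x : vec d) : norm_inf x > 1 -> exists i, Rabs (x i) > 1.
Proof.
move=> H; apply: NNPP => Hn; have : norm_inf x <= 1.
  apply: norm_le; first lra. move=> i; apply: Rnot_lt_le => Hi; apply: Hn; exists i; lra.
lra.
Qed.

Lemma norm_eq1 d (x : vec d) : norm_inf x = 1 ->
  (forall i, Rabs (x i) <= 1) /\ exists i, Rabs (x i) = 1.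
Proof.
move=> H; split; first by move=> i; rewrite -H; apply norm_ge.
case: (@fold_att _ (fun i => Rabs (x i)) (enum 'I_d)); rewrite -/(norm_inf x) H.
- lra.
- by case=> y [_ Hy]; exists y.
Qed.

Lemma norm_eq1_intro d (x : vec d) : (forall i, Rabs (x i) <= 1) -> (exists i, Rabs (x i) = 1) ->
  norm_inf x = 1.
Proof.
move=> H [i Hi]; apply Rle_antisym; first by apply norm_le => //; lra.
by rewrite -Hi; apply norm_ge.
Qed.

Arguments norm_gt1 {d}. Arguments norm_eq1 {d}. Arguments norm_ge {d}. Arguments norm_le {d}. Arguments norm_eq1_intro {d}.

Lemma size_length (A : Type) (s : list A) : size s = length s.
Proof. by elim: s => //= x s ->. Qed.

Lemma uniq_map_inj (A : Type) (T : eqType) (f : A -> T) l : NoDup l ->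
  (forall x y, List.In x l -> List.In y l -> f x = f y -> x = y) -> uniq (List.map f l).
Proof.
elim: l => [|x l IH] //= /NoDup_cons_iff [Hx Hl] Hinj.
apply/andP; split; last by apply: IH => // u v Hu Hv; apply: Hinj; right.
apply/negP => /In_mem /in_map_iff [y [Hy Hyl]].
have E : y = x by apply: Hinj; [right|left|].
by apply: Hx; rewrite -E.
Qed.

Definition good d (x : vec d) (lab : 'I_d * bool) : Prop :=
  if snd lab then x (fst lab) > 1 else x (fst lab) < -1.

Arguments good {d}.

Lemma mid_bound d (x y : vec d) : norm_inf (midpoint x y) = 1 ->
  forall i, -2 <= x i + y i <= 2.
Proof.
move=> /norm_eq1 [H _] i; move: (H i); rewrite /midpoint; split_Rabs; lra.
Qed.

Arguments mid_bound {d}.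

Lemma upper d : (2 <= d)%nat -> forall S : vec d -> Prop, is_Mset S ->
  forall l : list (vec d), List.NoDup l -> (forall x, List.In x l -> S x) ->
  (List.length l <= 2 * d - 1)%nat.
Proof.
move=> Hd S [HM HS] l Hnd HlS.
rewrite leqNgt; apply/negP => /ltP Hlt.
rewrite -multE -minusE in Hlt.
have H0 : leq 1 d by apply: leq_trans Hd.
have H1 : leq 2 d by [].
pose k0 := @Ordinal d 0 H0.
pose k1 := @Ordinal d 1 H1.
pose L := fun x : vec d => ClassicalEpsilon.epsilon (inhabits (k0, true)) (@good d x).
have Hgood : forall x, List.In x l -> good x (L x).
  move=> x Hx; apply: epsilon_spec.
  have [i Hi] := norm_gt1 x (HS x (HlS x Hx)).
  case: (Rlt_dec (x i) 0) => Hs; [exists (i, false) | exists (i, true)];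
    rewrite /good /=; move: Hi; rewrite /Rabs; case: Rcase_abs; lra.
have Hm : forall x y, List.In x l -> List.In y l -> x <> y -> forall i, -2 <= x i + y i <= 2.
  by move=> x y Hx Hy Hne; apply: mid_bound; apply: HM => //; apply: HlS.
have Hinj : forall x y, List.In x l -> List.In y l -> L x = L y -> x = y.
  move=> x y Hx Hy E; apply: NNPP => Hne.
  have := Hm x y Hx Hy Hne (fst (L x)).
  have := Hgood x Hx; have := Hgood y Hy; rewrite -E /good.
  case: (snd (L x)); lra.
have Hu := @uniq_map_inj _ _ L l Hnd Hinj.

have Hcard : #|mem (List.map L l)| = #|{: ('I_d * bool)%type}|.
  apply/eqP; rewrite eqn_leq max_card /=.
  move/card_uniqP: Hu => ->.
  rewrite card_prod card_ord card_bool size_length length_map.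
  rewrite muln2 -addnn; apply/leP; rewrite -plusE; lia.
have Hcov : forall lab, exists x, List.In x l /\ L x = lab.
  move=> lab.
  have Hin : lab \in List.map L l.
    move/subset_cardP: Hcard => /(_ (subset_predT _)) E.
    by rewrite E.
  move/In_mem/in_map_iff: Hin => [x [Hx Hxl]]; by exists x.
have [a [Ha La]] := Hcov (k0, true).
have [b [Hb Lb]] := Hcov (k0, false).
have [c [Hc Lc]] := Hcov (k1, true).
have Ga := Hgood a Ha; rewrite La /good /= in Ga.
have Gb := Hgood b Hb; rewrite Lb /good /= in Gb.
have Hab : a <> b by move=> E; move: La; rewrite E Lb.
have Hca : c <> a by move=> E; move: Lc; rewrite E La => -[].
have Hcb : c <> b by move=> E; move: Lc; rewrite E Lb => -[].
have [_ [j Hj]] := norm_eq1 _ (HM a b (HlS a Ha) (HlS b Hb) Hab).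
move: Hj; rewrite /midpoint => Hj.
case: (eqVneq j k0) => [Ej | Nj].
  have := Hm c a Hc Ha Hca k0; have := Hm c b Hc Hb Hcb k0.
  move: Hj; rewrite Ej; split_Rabs; lra.
have Hwa : forall w s, L w = (j, s) -> w <> a.
  by move=> w s Lw E; move: Lw; rewrite E La => -[] E'; move: Nj; rewrite E' eqxx.
have Hwb : forall w s, L w = (j, s) -> w <> b.
  by move=> w s Lw E; move: Lw; rewrite E Lb => -[] E'; move: Nj; rewrite E' eqxx.
case: (Rle_dec 0 (a j + b j)) => Hs.
- have [w [Hw Lw]] := Hcov (j, true).
  have Gw := Hgood w Hw; rewrite Lw /good /= in Gw.
  have := Hm w a Hw Ha (Hwa _ _ Lw) j; have := Hm w b Hw Hb (Hwb _ _ Lw) j.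
  move: Hj; split_Rabs; lra.
- have [w [Hw Lw]] := Hcov (j, false).
  have Gw := Hgood w Hw; rewrite Lw /good /= in Gw.
  have := Hm w a Hw Ha (Hwa _ _ Lw) j; have := Hm w b Hw Hb (Hwb _ _ Lw) j.
  move: Hj; split_Rabs; lra.
Qed.

Definition q d (k : nat) (s : bool) : vec d := fun i =>
  if Nat.eqb (nat_of_ord i) 0%nat then (if Nat.eqb k 0%nat then 2 else -1)
  else if Nat.eqb (nat_of_ord i) k then (if s then 2 else -2) else 0.

Definition Lab d : list (nat * bool) :=
  (0%nat, true) :: (List.map (fun k => (k, true)) (List.seq 1 (d - 1)%coq_nat) ++
                    List.map (fun k => (k, false)) (List.seq 1 (d - 1)%coq_nat)).

Lemma InLab d k s : List.In (k, s) (Lab d) ->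
  (k = 0%nat /\ s = true) \/ (1 <= k /\ k < d)%coq_nat.
Proof.
rewrite /Lab /= => -[[<- <-]|]; first by left.
move/in_app_iff => [] /in_map_iff [k' [[<- _] /in_seq H]]; right; lia.
Qed.

Lemma length_Lab d : (2 <= d)%coq_nat -> length (Lab d) = subn (muln 2 d) 1.
Proof. move=> Hd; rewrite /Lab /= length_app !length_map !length_seq -multE -minusE; lia. Qed.

Lemma NoDup_Lab d : NoDup (Lab d).
Proof.
rewrite /Lab; apply NoDup_cons.
  case/in_app_iff => /in_map_iff [k' [E /in_seq H]]; injection E; lia.
apply NoDup_app.
- apply FinFun.Injective_map_NoDup; [by move=> a b [] | apply seq_NoDup].
- apply FinFun.Injective_map_NoDup; [by move=> a b [] | apply seq_NoDup].
- move=> a /in_map_iff [k1 [<- _]] /in_map_iff [k2 [[] _]] //.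
Qed.

Ltac crush :=
  repeat match goal with
  | |- context [Nat.eqb ?a ?b] => destruct (Nat.eqb_spec a b); try subst
  | s : bool |- _ => destruct s
  end.

Ltac fin := intros; first [exfalso; lia | exfalso; lra | congruence | reflexivity].

Lemma q_inj d : forall p1 p2, List.In p1 (Lab d) -> List.In p2 (Lab d) ->
  q d (fst p1) (snd p1) = q d (fst p2) (snd p2) -> p1 = p2.
Proof.
move=> [k s] [k' s'] /InLab H /InLab H' /= E.
have E0 : forall i, q d k s i = q d k' s' i by move=> i; rewrite E.
case: H => [[? ?]|[Hk1 Hk2]]; case: H' => [[? ?]|[Hk1' Hk2']]; subst => //.
- have Hk : is_true (leq (S k') d) by apply/ltP.
  move: (E0 (Ordinal Hk)); rewrite /q /=; crush; fin.
- have Hk : is_true (leq (S k) d) by apply/ltP.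
  move: (E0 (Ordinal Hk)); rewrite /q /=; crush; fin.
- have Hk : is_true (leq (S k) d) by apply/ltP.
  move: (E0 (Ordinal Hk)); rewrite /q /=; crush; fin.
Qed.

Ltac fin2 := intros; first [exfalso; lia | congruence | (split_Rabs; lra) | (exfalso; lra)].

Lemma mid_q d k s k' s' : List.In (k, s) (Lab d) -> List.In (k', s') (Lab d) ->
  (k, s) <> (k', s') -> norm_inf (midpoint (q d k s) (q d k' s')) = 1.
Proof.
move=> /InLab H /InLab H' Hne.
apply: norm_eq1_intro.
  move=> i; rewrite /midpoint /q.
  case: H => [[? ?]|[Hk1 Hk2]]; case: H' => [[? ?]|[Hk1' Hk2']]; subst; crush; fin2.
have Hd : (1 <= d)%coq_nat by case: H => [[? ?]|[? ?]]; subst; [case: H' => [[? ?]|[? ?]]; subst; [congruence|lia] | lia].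
have H0 : is_true (leq 1 d) by apply/leP.
case: (Nat.eq_dec k k') => [Ekk|Nkk].
  subst k'.
  have Hk : (1 <= k)%coq_nat.
    case: H => [[? ?]|[? ?]]; subst; last lia.
    case: H' => [[? ?]|[? ?]]; subst; [congruence|lia].
  exists (Ordinal H0); rewrite /midpoint /q /=; crush; fin2.
case: (Nat.eq_dec k 0) => [Ek|Nk].
  subst k.
  have Hk : is_true (leq (S k') d).
    apply/ltP; case: H' => [[? ?]|[? ?]]; subst; [congruence|lia].
  exists (Ordinal Hk); rewrite /midpoint /q /=; crush; fin2.
have Hk : is_true (leq (S k) d).
  apply/ltP; case: H => [[? ?]|[? ?]]; subst; [congruence|lia].
exists (Ordinal Hk); rewrite /midpoint /q /=; crush; fin2.
Qed.

Lemma norm_q d k s : (1 <= d)%coq_nat -> List.In (k, s) (Lab d) -> norm_inf (q d k s) > 1.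
Proof.
move=> Hd /InLab [[? ?]|[Hk1 Hk2]]; subst.
- have H0 : is_true (leq 1 d) by apply/leP.
  apply: Rlt_le_trans (norm_ge _ (Ordinal H0)).
  rewrite /q /=; crush; fin2.
- have Hk : is_true (leq (S k) d) by apply/ltP.
  apply: Rlt_le_trans (norm_ge _ (Ordinal Hk)).
  rewrite /q /=; crush; fin2.
Qed.

Theorem theorem7 (d : nat) : (2 <= d)%nat -> m_equals d (2 * d - 1)%nat.
Proof.
move=> Hd; split; last exact: upper.
have Hd' : (2 <= d)%coq_nat by apply/leP.
exists (List.map (fun p => q d (fst p) (snd p)) (Lab d)); split; [|split].
- apply: FinFun.Injective_map_NoDup_in; [exact: q_inj | exact: NoDup_Lab].
- by rewrite length_map length_Lab.
- split.
  + move=> x y /in_map_iff [[k s] [<- Hp]] /in_map_iff [[k' s'] [<- Hp']] Hne.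
    apply: mid_q => // E; apply: Hne; rewrite E //.
  + move=> x /in_map_iff [[k s] [<- Hp]]; apply: norm_q => //; lia.
Qed.
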